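(* Let $G=(V,E)$ be a simple connected graph on $n\ge2$ nodes with all degrees at most $D$, let $e_1\in E$, and let $w:E\to\mathbb{R}_+$. Then there exist a spanning tree $F$ of $G$ with $e_1\in E(F)$ and integers $(k_e: e\in E(F))$ such that $k_{e_1}=1$, $k_e\le D$ for all $e\in E(F)$, $\sum_{e\in E(F)}k_e=|E|$, and $$\sum_{e\in E}w(e)\le\sum_{e\in E(F)}k_e\,w(e).$$ *)

(* Defs.v *)
(* A simple graph on a finite vertex type V is given by its
   edge set E : {set {set V}}, each edge being a 2-element vertex set. *)
From HB Require Import structures.
From mathcomp Require Import all_boot all_order all_algebra.
Set Implicit Arguments. Unset Strict Implicit. Unset Printing Implicit Defensive.
Import Order.TTheory GRing.Theory Num.Theory.

Section Graphs.
Variable V : finType.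

Definition simple_edges (E : {set {set V}}) : Prop :=
  forall e, e \in E -> #|e| = 2.

Definition adj (E : {set {set V}}) : rel V := fun x y => (x != y) && ([set x; y] \in E).

Definition connected_graph (E : {set {set V}}) : Prop :=
  forall x y : V, connect (adj E) x y.

Definition degree (E : {set {set V}}) (x : V) : nat := #|[set e in E | x \in e]|.

Definition has_cycle (F : {set {set V}}) : Prop :=
  exists s : seq V, [/\ (3 <= size s)%N, uniq s & cycle (adj F) s].

Definition spanning_tree (E F : {set {set V}}) : Prop :=
  [/\ F \subset E, connected_graph F & ~ has_cycle F].
End Graphs.

(* Main.v *)
Require Import Defs.
From HB Require Import structures.
From mathcomp Require Import all_boot all_order all_algebra.
From mathcomp Require Import zify.
Import Order.TTheory GRing.Theory Num.Theory.
Local Open Scope ring_scope.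

Set Implicit Arguments.
Section Aux.
Variable V : finType.
Implicit Types (S : {set V}) (F E : {set {set V}}).

Lemma adjC F x y : adj F x y = adj F y x.
Proof. by rewrite /adj eq_sym setUC. Qed.

Lemma no_cycle0 : ~ has_cycle (set0 : {set {set V}}).
Proof.
move=> [s [s3 _ cs]]; case: s s3 cs => [|x t] //= _.
by case: t => [|y t] /=; rewrite /adj inE andbF.
Qed.

Lemma acyc_leaf S F u v : ~ has_cycle F -> (forall f, f \in F -> f \subset S) ->
  u \in S -> v \notin S -> ~ has_cycle ([set u; v] |: F).
Proof.
move=> acF FS uS vS [s [s3 us cs]].
have key : forall y, adj ([set u; v] |: F) v y -> y = u.
  move=> y /andP[vy /setU1P[E1|yF]].
    have : y \in [set u; v] by rewrite -E1 set22.
    by rewrite !inE => /orP[/eqP//|/eqP yv]; rewrite yv eqxx in vy.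
  by have := subsetP (FS _ yF) v; rewrite set21 => /(_ isT) vS'; rewrite vS' in vS.
case vs: (v \in s).
  case: (rot_to vs) => i t Ht.
  have ut : uniq (v :: t) by rewrite -Ht rot_uniq.
  have st : size (v :: t) = size s by rewrite -Ht size_rot.
  rewrite -(rot_cycle i) Ht in cs.
  case: t Ht ut st cs => [|y [|z t]] Ht ut st cs; first by rewrite -st in s3.
    by rewrite -st in s3.
  move: cs; rewrite /= rcons_path => /andP[vy /andP[_ /andP[_ lv]]].
  rewrite adjC in lv.
  have yu := key _ vy; have lu := key _ lv.
  move: ut; rewrite /= => /andP[_ /andP[]].
  by rewrite yu -lu mem_last.
apply: acF; exists s; split => //.
apply: (sub_in_cycle (P := predC1 v)) cs; last first.
  by apply/allP => x xs /=; apply/eqP => xv; rewrite -xv xs in vs.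
move=> x y /= xv yv /andP[xy /setU1P[E1|]]; last by move=> H; rewrite /adj xy H.
have : v \in [set x; y] by rewrite E1 set22.
by rewrite !inE => /orP[/eqP vx|/eqP vy]; [move: xv; rewrite !inE vx eqxx|move: yv; rewrite !inE vy eqxx].
Qed.

Lemma cut_edge E S x y : connect (adj E) x y -> x \in S -> y \notin S ->
  exists u v, [/\ u \in S, v \notin S & adj E u v].
Proof.
move=> cxy xS yS.
case: (boolP [exists u, exists v, [&& u \in S, v \notin S & adj E u v]]).
  by move=> /existsP[u /existsP[v /and3P[uS vS uv]]]; exists u, v.
move=> H.
have nc : forall u v, u \in S -> adj E u v -> v \in S.
  move=> u v uS uv; apply/negPn/negP => vS; move: H; rewrite negb_exists => /forallP/(_ u).
  by rewrite negb_exists => /forallP/(_ v); rewrite uS vS uv.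
have cl : closed (adj E) S.
  move=> a b ab; apply/idP/idP => H1; first exact: nc ab.
  by rewrite adjC in ab; exact: nc ab.
by have := closed_connect cl cxy; rewrite xS => /esym yS'; rewrite yS' in yS.
Qed.

Lemma two_elt (e : {set V}) v : #|e| = 2%N -> v \in e -> exists z, z != v /\ e = [set z; v].
Proof.
move/eqP/cards2P => [x [y [xy ->]]]; rewrite !inE => /orP[/eqP->|/eqP->].
  by exists y; split; [rewrite eq_sym | rewrite setUC].
by exists x.
Qed.

Lemma sub_notin (e S : {set V}) v : e \subset v |: S -> v \notin e -> e \subset S.
Proof.
move=> H ve; apply/subsetP => x xe; have := subsetP H x xe.
by rewrite in_setU1 => /orP[/eqP xv|//]; rewrite -xv xe in ve.
Qed.

Section Inv.
Variable R : realFieldType.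
Variables (E : {set {set V}}) (e1 : {set V}) (w : {set V} -> R).

Record inv S F (c : {set V} -> {set V}) : Prop := Inv {
  iFE : F \subset E;
  ie1 : e1 \in F;
  iFS : forall f, f \in F -> f \subset S;
  iconn : forall x y, x \in S -> y \in S -> connect (adj F) x y;
  iacyc : ~ has_cycle F;
  ic1 : c e1 = e1;
  icF : forall e, e \in E -> e \subset S -> c e \in F;
  icw : forall e, e \in E -> e \subset S -> w e <= w (c e);
  icne : forall e, e \in E -> e \subset S -> e != e1 -> c e != e1;
  icnt : forall f, f \in F -> f != e1 -> exists v, forall e, e \in E -> e \subset S -> c e = f -> v \in e
}.

Hypothesis simpleE : simple_edges E.
Hypothesis connE : connected_graph E.

Lemma exists_max (C : {set {set V}}) e0 : e0 \in C -> exists2 p, p \in C & forall e, e \in C -> w e <= w p.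
Proof. by move=> e0C; case: (arg_maxP w e0C) => p pC H; exists p. Qed.

Lemma step S F c y : inv S F c -> y \notin S ->
  exists S' F' c', inv S' F' c' /\ (#|S| < #|S'|)%N.
Proof.
move=> I yS.
have e1S := iFS I (ie1 I).
have [x xe1] : exists x, x \in e1.
  apply/card_gt0P; by rewrite simpleE // (subsetP (iFE I)) // (ie1 I).
have xS := subsetP e1S x xe1.
have [u0 [v0 [u0S v0S uv0]]] := @cut_edge E S x y (connE x y) xS yS.
pose C := [set e in E | [exists u, exists v, [&& u \in S, v \notin S & e == [set u; v]]]].
have uv0C : [set u0; v0] \in C.
  rewrite inE; case/andP: uv0 => _ ->; apply/existsP; exists u0; apply/existsP; exists v0.
  by rewrite u0S v0S eqxx.
have [p pC pmax] := exists_max uv0C.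
move: (pC); rewrite inE => /andP[pE /existsP[u /existsP[v /and3P[uS vS /eqP pdef]]]].
have vp : v \in p by rewrite pdef set22.
have pF : p \notin F.
  by apply/negP => /(iFS I) /subsetP /(_ v vp) vS'; rewrite vS' in vS.
have pe1 : p != e1.
  by apply/eqP => pe; move: (subsetP e1S v); rewrite -pe vp => /(_ isT) vS'; rewrite vS' in vS.
have monoF : forall a b, connect (adj F) a b -> connect (adj (p |: F)) a b.
  move=> a b; apply: connect_sub => a' b' /andP[ab H]; apply: connect1.
  by rewrite /adj ab setU1r.
have uv : adj (p |: F) u v.
  rewrite /adj -pdef setU11 andbT; apply/eqP => uv; by rewrite -uv uS in vS.
exists (v |: S), (p |: F), (fun e : {set V} => if v \in e then p else c e); split; last first.
  by rewrite cardsU1 vS.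
split.
- by rewrite subUset sub1set pE (iFE I).
- by rewrite setU1r // (ie1 I).
- move=> f /setU1P[->|fF].
    apply/subsetP => z; rewrite pdef !inE => /orP[/eqP->|->]; last by [].
    by rewrite uS orbT.
  exact: subset_trans (iFS I fF) (subsetU1 _ _).
- move=> a b; rewrite !in_setU1 => /orP[/eqP->|aS] /orP[/eqP->|bS].
  + exact: connect0.
  + apply: connect_trans (monoF _ _ (iconn I uS bS)); apply: connect1; by rewrite adjC.
  + apply: connect_trans (connect1 uv); exact: monoF (iconn I aS uS).
  + exact: monoF (iconn I aS bS).
- rewrite pdef; apply: acyc_leaf (iacyc I) (iFS I) uS vS.
- have -> : (v \in e1) = false by apply/negP => /(subsetP e1S) vS'; rewrite vS' in vS.
  exact: ic1 I.
- move=> e eE eS; case: ifP => ve; first by rewrite setU11.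
  by rewrite setU1r // (icF I eE (sub_notin eS (negbT ve))).
- move=> e eE eS; case: ifP => ve; last first. have H1 := icw I eE. have H2 := sub_notin eS (negbT ve). exact: H1 H2.
  apply: pmax; have [z [zv ez]] := two_elt (simpleE eE) ve.
  have zS : z \in S.
    have := subsetP eS z; rewrite ez set21 in_setU1 => /(_ isT) /orP[/eqP zv'|//].
    by rewrite zv' eqxx in zv.
  rewrite inE eE; apply/existsP; exists z; apply/existsP; exists v.
  by rewrite zS vS ez eqxx.
- move=> e eE eS ee1; case: ifP => ve //.
  exact: icne I _ eE (sub_notin eS (negbT ve)) ee1.
- move=> f /setU1P[->|fF] fe1.
    exists v => e eE eS; case: ifP => ve // ce.
    by have := icF I eE (sub_notin eS (negbT ve)); rewrite ce (negbTE pF).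
  have [v1 Hv1] := icnt I fF fe1.
  exists v1 => e eE eS; case: ifP => ve ce.
    by rewrite ce fF in pF.
  exact: Hv1 _ eE (sub_notin eS (negbT ve)) ce.
Qed.


Lemma grow n : forall S F c, (#|~: S| <= n)%N -> inv S F c -> exists F c, inv setT F c.
Proof.
elim: n => [|n IH] S F c Hn I.
  have SE : S = setT.
    apply/setP => y; rewrite inE; apply/negPn/negP => yS.
    have : (0 < #|~: S|)%N by apply/card_gt0P; exists y; rewrite inE.
    lia.
  by rewrite SE in I; exists F, c.
case: (boolP [exists y, y \notin S]) => [/existsP[y yS]|H].
  have [S' [F' [c' [I' lt]]]] := step y I yS.
  apply: (IH S' F' c') => //.
  have := cardsC S; have := cardsC S'; lia.
have SE : S = setT.
  apply/setP => y; rewrite inE; apply/negPn/negP => yS.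
  by move: H; rewrite negb_exists => /forallP /(_ y); rewrite yS.
by rewrite SE in I; exists F, c.
Qed.

End Inv.
End Aux.
Unset Implicit Arguments.

Theorem lemma17 (R : realFieldType) (V : finType) (E : {set {set V}}) (D : nat)
    (e1 : {set V}) (w : {set V} -> R) :
  (2 <= #|V|)%N ->
  simple_edges E ->
  connected_graph E ->
  (forall x : V, (degree E x <= D)%N) ->
  e1 \in E ->
  (forall e, e \in E -> 0 <= w e) ->
  exists (F : {set {set V}}) (k : {set V} -> int),
    [/\ spanning_tree E F, e1 \in F & k e1 = 1] /\
    [/\ (forall e, e \in F -> k e <= D%:Z),
        \sum_(e in F) k e = (#|E|)%:Z &
        \sum_(e in E) w e <= \sum_(e in F) (k e)%:~R * w e].
Proof.
move=> _ simpleE connE degD e1E w0.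
have [a [b [ab e1ab]]] : exists a b, a != b /\ e1 = [set a; b].
  by apply/cards2P; rewrite simpleE.
have sub_e1 : forall e, e \in E -> e \subset [set a; b] -> e = e1.
  move=> e eE eS; apply/eqP.
  by rewrite eqEcard (simpleE _ eE) (simpleE _ e1E) leqnn andbT e1ab.
have I0 : inv R E e1 w [set a; b] [set e1] (fun _ => e1).
  split.
  - by rewrite sub1set.
  - by rewrite set11.
  - by move=> f; rewrite inE => /eqP->; rewrite e1ab.
  - have adab : adj [set e1] a b by rewrite /adj ab -e1ab set11.
    move=> x y; rewrite !inE => /orP[/eqP->|/eqP->] /orP[/eqP->|/eqP->];
      try exact: connect0; apply: connect1 => //; by rewrite adjC.
  - have -> : [set e1] = [set a; b] |: set0 by rewrite setU0 e1ab.
    have H1 : forall f, f \in (set0 : {set {set V}}) -> f \subset [set a] by move=> f; rewrite inE.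
    have H2 : a \in [set a] by rewrite set11.
    have H3 : b \notin [set a] by rewrite inE eq_sym.
    exact: (@acyc_leaf V [set a] set0 a b (@no_cycle0 V) H1 H2 H3).
  - by [].
  - by move=> e _ _; rewrite set11.
  - by move=> e eE eS; rewrite (sub_e1 e eE eS).
  - by move=> e eE eS; rewrite (sub_e1 e eE eS) eqxx.
  - by move=> f; rewrite inE => ->.
have [F [c If]] := grow simpleE connE #|V| (max_card _) I0.
pose k f := (#|[set e in E | c e == f]|)%:Z.
exists F, k.
have ke1set : [set e in E | c e == e1] = [set e1].
  apply/setP => e; rewrite !inE.
  apply/andP/eqP => [[eE /eqP ce]|->]; last by rewrite e1E (ic1 If) eqxx.
  apply/eqP; apply/negPn/negP => ne.
  by have := icne If eE (subsetT _) ne; rewrite ce eqxx.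
split; first split.
- split; first exact: iFE If.
    by move=> x y; apply: (iconn If); exact: in_setT.
  exact: iacyc If.
- exact: ie1 If.
- by rewrite /k ke1set cards1.
split.
- move=> f fF; rewrite /k lez_nat; case: (eqVneq f e1) => [->|fe1].
    rewrite ke1set cards1; apply: leq_trans (degD a); rewrite /degree.
    by apply/card_gt0P; exists e1; rewrite inE e1E e1ab set21.
  have [v Hv] := icnt If fF fe1.
  apply: leq_trans (degD v); apply: subset_leq_card; apply/subsetP => e.
  by rewrite !inE => /andP[eE /eqP ce]; rewrite eE (Hv e eE (subsetT _) ce).
- have -> : (#|E|)%:Z = \sum_(e in E) (1 : int) by rewrite sumr_const natz.
  rewrite [RHS](partition_big c (fun f => f \in F)) /=; last first.
    by move=> e eE; apply: (icF If eE); exact: subsetT.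
  apply: eq_bigr => f fF; rewrite /k -natz -sumr_const.
  by apply: eq_bigl => e; rewrite inE.
- apply: le_trans (ler_sum _ (fun e eE => icw If eE (subsetT e))) _.
  rewrite [X in X <= _](partition_big c (fun f => f \in F)) /=; last first.
    by move=> e eE; apply: (icF If eE); exact: subsetT.
  apply: ler_sum => f fF.
  rewrite (eq_bigr (fun _ => w f)); last by move=> e /andP[_ /eqP->].
  have -> : \sum_(i in E | c i == f) w f = \sum_(i in [set e in E | c e == f]) w f.
    by apply: eq_bigl => e; rewrite inE.
  by rewrite sumr_const -mulr_natl /k pmulrn.
Qed.
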